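(* Let $\psi$ be a branching mechanism and $g$ the associated gauge function (see context). Let $c\in(0,\infty)$. Then there exists $r(c)\in(0,r_0)$, depending only on $c$, such that for all $r\in(0,r(c))$, $$g(r)\,\psi'^{-1}(c/r^2)\le 4r^2,$$ where $\psi'^{-1}$ is the inverse function of the derivative $\psi'$.
   Context: A branching mechanism is $\psi(\lambda)=\alpha\lambda+\beta\lambda^2+\int_{(0,\infty)}(e^{-\lambda r}-1+\lambda r)\pi(\mathrm{d}r)$, $\lambda\ge0$, with $\alpha,\beta\ge0$ and $\pi$ a Borel measure on $(0,\infty)$ with $\int(r\wedge r^2)\pi(\mathrm{d}r)<\infty$. Let $\varphi=\psi'\circ\psi^{-1}$, whose inverse $\varphi^{-1}$ is defined on $[\alpha,\infty)$. The gauge function is $g(r)=\log\log\frac1r\,/\,\varphi^{-1}\big((\frac1r\log\log\frac1r)^2\big)$ for $r\in(0,r_0)$, with $r_0=\min(\alpha^{-1/2},e^{-e})$ (and $\alpha^{-1/2}=\infty$ if $\alpha=0$). *)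

(* Defs.v *)
From HB Require Import structures.
From mathcomp Require Import all_boot all_order all_algebra.
From mathcomp Require Import all_classical all_reals all_analysis.
Set Implicit Arguments. Unset Strict Implicit. Unset Printing Implicit Defensive.
Import Order.TTheory GRing.Theory Num.Theory.
Import numFieldNormedType.Exports.
Local Open Scope classical_set_scope.
Local Open Scope ring_scope.

Section defs.
Context {R : realType}.

Definition posR : set R := `]0, +oo[.

(* Branching mechanism psi(l) = a l + b l^2 + \int_(0,oo) (e^{-l r} - 1 + l r) pi(dr).
   Only meaningful for l >= 0. *)
Definition bm_psi (a b : R) (pi : {measure set R -> \bar R}) (l : R) : R :=
  a * l + b * l ^+ 2 +
  fine (\int[pi]_(r in posR) (expR (- (l * r)) - 1 + l * r)%:E).

Definition levy_cond (pi : {measure set R -> \bar R}) : Prop :=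
  (\int[pi]_(r in posR) (Order.min r (r ^+ 2))%:E < +oo)%E.

(* Inverse on (0,oo) of a (strictly increasing, continuous) function f:
   inv_pos f y = sup {x > 0 | f x <= y}; for such f and y in the range of
   f on (0,oo) this is the unique x > 0 with f x = y. *)
Definition inv_pos (f : R -> R) (y : R) : R := sup [set x : R | 0 < x /\ f x <= y].

Definition bm_dpsi a b pi : R -> R := derive1 (bm_psi a b pi).
Definition bm_dpsi_inv a b pi : R -> R := inv_pos (bm_dpsi a b pi).
Definition bm_phi a b pi : R -> R := bm_dpsi a b pi \o inv_pos (bm_psi a b pi).
Definition bm_phi_inv a b pi : R -> R := inv_pos (bm_phi a b pi).

Definition gauge a b pi (r : R) : R :=
  ln (ln r^-1) / bm_phi_inv a b pi ((r^-1 * ln (ln r^-1)) ^+ 2).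

(* r_0 = min(a^{-1/2}, e^{-e}), with a^{-1/2} = oo when a = 0 *)
Definition gauge_r0 (a : R) : R :=
  if a == 0 then expR (- expR 1) else Order.min (Num.sqrt a)^-1 (expR (- expR 1)).
End defs.

(* Main.v *)
Require Import Defs.
From HB Require Import structures.
From mathcomp Require Import all_boot all_order all_algebra.
From mathcomp Require Import all_classical all_reals all_analysis.
From mathcomp Require Import ring lra measurable_realfun.
Set Implicit Arguments. Unset Strict Implicit.
Import Order.TTheory GRing.Theory Num.Theory.
Import numFieldNormedType.Exports.
Local Open Scope classical_set_scope.
Local Open Scope ring_scope.

Lemma mF (R : realType) (l : R) : measurable_fun setT (fun r : R => expR (- (l * r)) - 1 + l * r).
Proof.
apply: measurable_funD; last by apply: measurable_funM.
apply: measurable_funB => //.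
apply: measurableT_comp; first exact: measurable_expR.
apply: measurable_funN; exact: measurable_funM.
Qed.
Lemma mG (R : realType) (l : R) : measurable_fun setT (fun r : R => r * (1 - expR (- (l * r)))).
Proof.
apply: measurable_funM => //; apply: measurable_funB => //.
apply: measurableT_comp; first exact: measurable_expR.
apply: measurable_funN; exact: measurable_funM.
Qed.
Lemma mmin (R : realType) : measurable_fun setT (fun r : R => Order.min r (r^+2)).
Proof. by apply: measurable_minr. Qed.

Lemma e1 (R : realType) (x : R) : 1 - x <= expR (- x).
Proof. by have := expR_ge1Dx (- x). Qed.

Lemma e_le1 (R : realType) (x : R) : 0 <= x -> expR (- x) <= 1.
Proof. move=> x0; rewrite -expR0 ler_expR; lra. Qed.

Lemma eF_ge0 (R : realType) (x : R) : 0 <= expR (- x) - 1 + x.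
Proof. have := e1 x; lra. Qed.

Lemma eF_le (R : realType) (x : R) : 0 <= x -> expR (- x) - 1 + x <= x * (1 - expR (- x)).
Proof.
move=> x0.
have h : expR (- x) * (1 + x) <= 1.
  rewrite expRN ler_pdivrMl ?expR_gt0 // mulr1; exact: expR_ge1Dx.
nra.
Qed.

Lemma eG_le (R : realType) (x : R) : 0 <= x -> 1 - expR (- x) <= x.
Proof. have := e1 x; lra. Qed.

Lemma eG_ge0 (R : realType) (x : R) : 0 <= x -> 0 <= 1 - expR (- x).
Proof. move=> /e_le1; lra. Qed.

Lemma eF_lb (R : realType) (x : R) : 0 <= x -> x * (1 - expR (- x)) / 4 <= expR (- x) - 1 + x.
Proof.
move=> x0; have g1 := eG_le x0; have g0 := eG_ge0 x0.
have [x2|x2] := leP x 2.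
  have h1 : 1 - x / 2 <= expR (- (x / 2)) by apply: e1.
  have h2 : expR (- x) = expR (- (x / 2)) ^+ 2.
    by rewrite expr2 -expRD; congr expR; field.
  have h3 : (1 - x / 2) ^+ 2 <= expR (- x).
    rewrite h2 ler_pXn2r // nnegrE; [lra | exact: ltW (expR_gt0 _)].
  have h4 : x * (1 - expR (- x)) <= x * x by apply: ler_wpM2l.
  nra.
have := expR_gt0 (- x); have := e_le1 x0; nra.
Qed.

Lemma eabs (R : realType) (y : R) : `|1 - expR y| <= `|y| * expR `|y|.
Proof.
have [y0|y0] := leP 0 y.
  rewrite (ger0_norm y0) ler0_norm; last by rewrite subr_le0 -expR0 ler_expR.
  have h : expR y * (1 - y) <= 1.
    by rewrite mulrC -ler_pdivlMr ?expR_gt0 // div1r -expRN; exact: e1.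
  nra.
rewrite (ltr0_norm y0) ger0_norm; last by rewrite subr_ge0 -expR0 ler_expR ltW.
have := e1 (- y); rewrite opprK => h.
have h2 : 1 <= expR (- y) by rewrite -expR0 ler_expR; lra.
nra.
Qed.

Lemma e7 (R : realType) (l r : R) : 0 < l -> 0 <= r -> r * expR (- (l * r / 2)) <= 2 / l.
Proof.
move=> l0 r0; set y := l * r / 2.
have hy : y <= expR y by have := expR_ge1Dx y; lra.
have : r = 2 / l * y by rewrite /y; field; lra.
move=> ->.
have he : expR y * expR (- y) = 1 by rewrite -expRD subrr expR0.
have e0 := expR_gt0 (- y).
have h : y * expR (- y) <= 1 by nra.
have hl : 0 < 2 / l by apply: divr_gt0.
nra.
Qed.


Definition Fl (R : realType) (l : R) := fun r : R => expR (- (l * r)) - 1 + l * r.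
Definition Gl (R : realType) (l : R) := fun r : R => r * (1 - expR (- (l * r))).
Definition mr (R : realType) := fun r : R => Order.min r (r ^+ 2).

Lemma posR_meas (R : realType) : measurable (posR : set R).
Proof. exact: measurable_itv. Qed.

Lemma mS (R : realType) (f : R -> R) (D : set R) : measurable_fun setT f -> measurable_fun D f.
Proof. by move=> mf; apply: (measurable_funS measurableT (@subsetT _ _) mf). Qed.

Lemma posR_gt0 (R : realType) (r : R) : posR r -> 0 < r.
Proof. by rewrite /posR /= in_itv /= andbT. Qed.

Lemma mr_ge0 (R : realType) (r : R) : 0 <= r -> 0 <= mr r.
Proof. by move=> r0; rewrite /mr le_min r0 sqr_ge0. Qed.

Lemma le_minK (R : realType) (K r f : R) : 0 < r -> f <= K * r -> f <= K * r ^+ 2 -> f <= K * mr r.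
Proof.
move=> r0 h1 h2; rewrite /mr; have [r1|r1] := leP r 1.
  by rewrite min_r // expr2; rewrite -[X in _ <= X]mulr1 ler_pM2l.
rewrite min_l //; rewrite expr2 -[X in X <= _]mulr1 ler_pM2l //; exact: ltW.
Qed.

Lemma mr_int (R : realType) (pi : {measure set R -> \bar R}) : levy_cond pi ->
  pi.-integrable posR (EFin \o (@mr R)).
Proof.
move=> hpi; apply/integrableP; split.
  by apply/measurable_EFinP; apply: mS (@mmin R).
rewrite /levy_cond in hpi; apply: le_lt_trans hpi; rewrite le_eqVlt; apply/orP; left; apply/eqP.
apply: eq_integral => x /[!inE] xp /=; rewrite ger0_norm // mr_ge0 //; exact/ltW/posR_gt0.
Qed.

Lemma int_dom (R : realType) (pi : {measure set R -> \bar R}) (f : R -> R) (K : R) :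
  levy_cond pi -> measurable_fun setT f -> (forall r, 0 < r -> `|f r| <= K * mr r) ->
  pi.-integrable posR (EFin \o f).
Proof.
move=> hpi mf hf.
apply: (@le_integrable _ _ _ pi _ (@posR_meas R) _ (EFin \o (fun r => K * mr r))).
- by apply/measurable_EFinP; apply: mS mf.
- move=> x /posR_gt0 x0 /=; rewrite lee_fin (le_trans (hf _ x0)) //; exact: ler_norm.
- apply: eq_integrable (integrableZl (@posR_meas R) K (mr_int hpi)) => //.
exact: posR_meas.
Qed.

Lemma mFl (R : realType) (l : R) : measurable_fun setT (Fl l).
Proof. exact: mF. Qed.
Lemma mGl (R : realType) (l : R) : measurable_fun setT (Gl l).
Proof. exact: mG. Qed.

Lemma Fl_int (R : realType) (pi : {measure set R -> \bar R}) (l : R) : levy_cond pi -> 0 <= l ->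
  pi.-integrable posR (EFin \o Fl l).
Proof.
move=> hpi l0; apply: (int_dom (K := l + l ^+ 2) hpi (mFl l)) => r r0.
have x0 : 0 <= l * r by apply: mulr_ge0 => //; exact: ltW.
rewrite /Fl ger0_norm; last exact: eF_ge0.
have h1 := eF_le x0; have h2 := eG_le x0; have h3 := eG_ge0 x0; have h4 := expR_gt0 (- (l * r)).
apply: le_minK => //.
  have : l * r * (1 - expR (- (l * r))) <= l * r by nra.
  have : 0 <= l ^+ 2 * r by apply: mulr_ge0 => //; [exact: sqr_ge0 | exact: ltW].
  rewrite expr2; nra.
have : l * r * (1 - expR (- (l * r))) <= (l * r) * (l * r) by nra.
have : 0 <= l * r * r by apply: mulr_ge0 => //; exact: ltW.
rewrite !expr2; nra.
Qed.

Lemma Gl_int (R : realType) (pi : {measure set R -> \bar R}) (l : R) : levy_cond pi -> 0 <= l ->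
  pi.-integrable posR (EFin \o Gl l).
Proof.
move=> hpi l0; apply: (int_dom (K := 1 + l) hpi (mGl l)) => r r0.
have x0 : 0 <= l * r by apply: mulr_ge0 => //; exact: ltW.
have h2 := eG_le x0; have h3 := eG_ge0 x0; have h4 := expR_gt0 (- (l * r)).
rewrite /Gl ger0_norm; last by apply: mulr_ge0 => //; exact: ltW.
apply: le_minK => //.
  have : r * (1 - expR (- (l * r))) <= r by nra.
  nra.
have : r * (1 - expR (- (l * r))) <= r * (l * r) by nra.
have : 0 <= r * r by nra.
rewrite expr2; nra.
Qed.

Lemma IG_mono (R : realType) (pi : {measure set R -> \bar R}) (s t : R) : levy_cond pi ->
  0 <= s -> s <= t -> Rintegral pi posR (Gl s) <= Rintegral pi posR (Gl t).
Proof.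
move=> hpi s0 st; apply: le_Rintegral; [exact: posR_meas|exact: Gl_int|apply: Gl_int => //; exact: le_trans st|].
move=> r /posR_gt0 r0; rewrite /Gl ler_pM2l // lerD2l lerN2 ler_expR lerN2.
by rewrite ler_pM2r.
Qed.

Lemma IG_double (R : realType) (pi : {measure set R -> \bar R}) (l : R) : levy_cond pi ->
  0 <= l -> Rintegral pi posR (Gl (2 * l)) <= 2 * Rintegral pi posR (Gl l).
Proof.
move=> hpi l0; rewrite -RintegralZl; [|exact: posR_meas|exact: Gl_int].
apply: le_Rintegral; [exact: posR_meas|apply: Gl_int => //; lra| |].
  exact: (integrableZl (@posR_meas R) 2 (Gl_int hpi l0)).
move=> r /posR_gt0 r0; rewrite /Gl.
have e2 : expR (- (2 * l * r)) = expR (- (l * r)) ^+ 2.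
  by rewrite expr2 -expRD; congr expR; ring.
rewrite e2.
have x0 : 0 <= l * r by apply: mulr_ge0 => //; exact: ltW.
have h1 := e_le1 x0; have h2 := expR_gt0 (- (l * r)).
set E := expR (- (l * r)) in h1 h2 *.
have h3 : 0 <= r * (1 - E) by apply: mulr_ge0; [exact: ltW|lra].
have h4 : 0 <= r * (1 - E) * (1 - E) by apply: mulr_ge0 => //; lra.
rewrite expr2; nra.
Qed.

Lemma IF_lb (R : realType) (pi : {measure set R -> \bar R}) (w : R) : levy_cond pi ->
  0 <= w -> w / 4 * Rintegral pi posR (Gl w) <= Rintegral pi posR (Fl w).
Proof.
move=> hpi w0; rewrite -RintegralZl; [|exact: posR_meas|exact: Gl_int].
apply: le_Rintegral; [exact: posR_meas| |exact: Fl_int|].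
  exact: (integrableZl (@posR_meas R) _ (Gl_int hpi w0)).
move=> r /posR_gt0 r0; rewrite /Gl /Fl.
have x0 : 0 <= w * r by apply: mulr_ge0 => //; exact: ltW.
have := eF_lb x0.
by rewrite mulrA (mulrC (w / 4)) mulrA (mulrC r) -mulrA mulrC mulrA; move=> h; apply: le_trans h; rewrite le_eqVlt; apply/orP; left; apply/eqP; field.
Qed.

Lemma intB (R : realType) (pi : {measure set R -> \bar R}) (f g : R -> R) :
  pi.-integrable posR (EFin \o f) -> pi.-integrable posR (EFin \o g) ->
  pi.-integrable posR (EFin \o (fun r => f r - g r)).
Proof.
move=> hf hg; apply: eq_integrable (integrableB (@posR_meas R) hf hg) => //. exact: posR_meas.
Qed.

Lemma IF_conv (R : realType) (pi : {measure set R -> \bar R}) (s t : R) : levy_cond pi ->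
  0 <= s -> 0 <= t ->
  (t - s) * Rintegral pi posR (Gl s) <= Rintegral pi posR (Fl t) - Rintegral pi posR (Fl s).
Proof.
move=> hpi s0 t0.
rewrite -RintegralZl; [|exact: posR_meas|exact: Gl_int].
rewrite -RintegralB; [|exact: posR_meas|exact: Fl_int|exact: Fl_int].
apply: le_Rintegral; [exact: posR_meas| |apply: intB; exact: Fl_int|].
  exact: (integrableZl (@posR_meas R) _ (Gl_int hpi s0)).
move=> r /posR_gt0 r0; rewrite /Gl /Fl.
have et : expR (- (t * r)) = expR (- (s * r)) * expR (- ((t - s) * r)).
  by rewrite -expRD; congr expR; ring.
rewrite et.
have := e1 ((t - s) * r).
have := expR_gt0 (- (s * r)).
set E := expR (- (s * r)); set E2 := expR (- ((t - s) * r)).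
nra.
Qed.

Lemma Gdiff (R : realType) (l h r : R) : 0 < l -> `|h| <= l / 2 -> 0 < r ->
  `|Gl (l + h) r - Gl l r| <= `|h| * ((1 + 2 / l) * mr r).
Proof.
move=> l0 hl r0.
have eq1 : Gl (l + h) r - Gl l r = r * expR (- (l * r)) * (1 - expR (- (h * r))).
  rewrite /Gl; have -> : expR (- ((l + h) * r)) = expR (- (l * r)) * expR (- (h * r)).
    by rewrite -expRD; congr expR; ring.
  ring.
have E0 := expR_gt0 (- (l * r)).
have b1 := eabs (- (h * r)).
rewrite normrN normrM (gtr0_norm r0) in b1.
have b2 : expR (- (l * r)) * expR (`|h| * r) <= expR (- (l * r / 2)).
  rewrite -expRD ler_expR.
  have : `|h| * r <= l / 2 * r by rewrite ler_pM2r.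
  lra.
have b3 : `|Gl (l + h) r - Gl l r| <= `|h| * (r * (r * expR (- (l * r / 2)))).
  rewrite eq1 normrM (ger0_norm (ltW (mulr_gt0 r0 E0))).
  have hp : 0 <= `|h| * r * r by apply: mulr_ge0; [apply: mulr_ge0; [exact: normr_ge0|exact: ltW]|exact: ltW].
  have c1 := ler_wpM2l (ltW (mulr_gt0 r0 E0)) b1.
  apply: le_trans c1 _.
  have c2 := ler_wpM2l hp b2.
  apply: le_trans _ (le_trans c2 _); rewrite le_eqVlt; apply/orP; left; apply/eqP; ring.
apply: le_trans b3 _; apply: ler_wpM2l; first exact: normr_ge0.
have q0 := expR_gt0 (- (l * r / 2)).
have q1 := e7 l0 (ltW r0).
have q2 : expR (- (l * r / 2)) <= 1 by apply: e_le1; apply: divr_ge0 => //; nra.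
have il : 0 < 2 / l by apply: divr_gt0.
set q := expR (- (l * r / 2)) in q0 q1 q2 *.
apply: le_minK => //.
  have : r * q <= 2 / l by [].
  nra.
rewrite expr2; nra.
Qed.

Lemma mr_intZ (R : realType) (pi : {measure set R -> \bar R}) (k : R) : levy_cond pi ->
  pi.-integrable posR (EFin \o (fun r => k * mr r)).
Proof.
move=> hpi; apply: eq_integrable (integrableZl (@posR_meas R) k (mr_int hpi)) => //.
exact: posR_meas.
Qed.

Lemma IG_cont (R : realType) (pi : {measure set R -> \bar R}) (l h : R) : levy_cond pi ->
  0 < l -> `|h| <= l / 2 ->
  `|Rintegral pi posR (Gl (l + h)) - Rintegral pi posR (Gl l)| <=
  `|h| * (1 + 2 / l) * Rintegral pi posR (@mr R).
Proof.
move=> hpi l0 hl.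
have lh : 0 <= l + h by move: hl; rewrite ler_norml => /andP[hh1 hh2]; lra.
have iD := intB (Gl_int hpi lh) (Gl_int hpi (ltW l0)).
rewrite -RintegralB; [|exact: posR_meas|exact: (Gl_int hpi lh)|exact: (Gl_int hpi (ltW l0))].
apply: le_trans (le_normr_Rintegral (@posR_meas R) iD) _.
rewrite -RintegralZl; [|exact: posR_meas|exact: mr_int].
apply: le_Rintegral; [exact: posR_meas| | exact: mr_intZ |].
  apply: (int_dom (K := `|h| * (1 + 2 / l)) hpi).
    apply: measurableT_comp; first exact: normr_measurable.
    exact: measurable_funB (mGl _) (mGl _).
  by move=> r r0; rewrite normr_id -mulrA; exact: Gdiff.
by move=> r /posR_gt0 r0; rewrite -mulrA; exact: Gdiff.
Qed.

Definition Dp (R : realType) (a b : R) (pi : {measure set R -> \bar R}) (l : R) :=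
  a + 2 * b * l + Rintegral pi posR (Gl l).

Lemma psiE (R : realType) (a b : R) (pi : {measure set R -> \bar R}) (l : R) :
  bm_psi a b pi l = a * l + b * l ^+ 2 + Rintegral pi posR (Fl l).
Proof. by []. Qed.

Lemma psi_conv (R : realType) (a b : R) (pi : {measure set R -> \bar R}) (s t : R) :
  levy_cond pi -> 0 <= b -> 0 <= s -> 0 <= t ->
  (t - s) * Dp a b pi s <= bm_psi a b pi t - bm_psi a b pi s.
Proof.
move=> hpi hb s0 t0; rewrite !psiE /Dp.
have := IF_conv hpi s0 t0.
have : 0 <= b * (t - s) ^+ 2 by apply: mulr_ge0 => //; exact: sqr_ge0.
rewrite !expr2; nra.
Qed.

Lemma psi_lb (R : realType) (a b : R) (pi : {measure set R -> \bar R}) (w : R) :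
  levy_cond pi -> 0 <= a -> 0 <= b -> 0 <= w ->
  w * Dp a b pi w / 4 <= bm_psi a b pi w.
Proof.
move=> hpi ha hb w0; rewrite psiE /Dp.
have := IF_lb hpi w0.
have : 0 <= a * w by exact: mulr_ge0.
have : 0 <= b * w ^+ 2 by apply: mulr_ge0 => //; exact: sqr_ge0.
rewrite !expr2; nra.
Qed.

Lemma Dp_mono (R : realType) (a b : R) (pi : {measure set R -> \bar R}) (s t : R) :
  levy_cond pi -> 0 <= b -> 0 <= s -> s <= t -> Dp a b pi s <= Dp a b pi t.
Proof.
move=> hpi hb s0 st; rewrite /Dp.
have := IG_mono hpi s0 st.
have : b * s <= b * t by apply: ler_wpM2l.
nra.
Qed.

Lemma Dp_double (R : realType) (a b : R) (pi : {measure set R -> \bar R}) (l : R) :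
  levy_cond pi -> 0 <= a -> 0 <= l -> Dp a b pi (2 * l) <= 2 * Dp a b pi l.
Proof.
move=> hpi ha l0; rewrite /Dp.
have := IG_double hpi l0.
nra.
Qed.

Lemma Dp_cont (R : realType) (a b : R) (pi : {measure set R -> \bar R}) (l h : R) :
  levy_cond pi -> 0 <= b -> 0 < l -> `|h| <= l / 2 ->
  `|Dp a b pi (l + h) - Dp a b pi l| <= `|h| * (2 * b + (1 + 2 / l) * Rintegral pi posR (@mr R)).
Proof.
move=> hpi hb l0 hl; rewrite /Dp.
have := IG_cont hpi l0 hl.
set I1 := Rintegral _ _ (Gl (l + h)); set I2 := Rintegral _ _ (Gl l).
set M := Rintegral _ _ (@mr R) => c.
have -> : a + 2 * b * (l + h) + I1 - (a + 2 * b * l + I2) = 2 * b * h + (I1 - I2) by ring.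
apply: le_trans (ler_normD _ _) _.
rewrite normrM (ger0_norm (mulr_ge0 _ hb)) //.
have : `|h| * (1 + 2 / l) * M = `|h| * ((1 + 2 / l) * M) by ring.
nra.
Qed.

Lemma lim_test (R : realType) (f : R -> R) (L C d : R) : 0 < d -> 0 < C ->
  (forall h, h != 0 -> `|h| <= d -> `|f h - L| <= `|h| * C) ->
  lim (f @ 0^') = L.
Proof.
move=> d0 C0 hf.
apply: cvg_lim => //.
apply/cvgrPdist_le => e e0.
have m0 : 0 < Order.min d (e / C) by rewrite lt_min d0 divr_gt0.
near=> h.
have hn : h != 0 by near: h; exact: nbhs_dnbhs_neq.
have hm : `|h| <= Order.min d (e / C) by near: h; exact: dnbhs0_le.
move: hm; rewrite le_min => /andP[h1 h2].
rewrite distrC; apply: le_trans (hf h hn h1) _.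
by rewrite -ler_pdivlMr.
Unshelve. all: by end_near.
Qed.

Lemma dpsiE (R : realType) (a b : R) (pi : {measure set R -> \bar R}) (l : R) :
  levy_cond pi -> 0 <= b -> 0 < l -> bm_dpsi a b pi l = Dp a b pi l.
Proof.
move=> hpi hb l0; rewrite /bm_dpsi /derive1.
set C := 2 * b + (1 + 2 / l) * Rintegral pi posR (@mr R).
have C0 : 0 <= C.
  apply: addr_ge0; first nra.
  apply: mulr_ge0; first by have := divr_gt0 (ltr0Sn R 1) l0; lra.
  by apply: Rintegral_ge0 => r /posR_gt0 /ltW; exact: mr_ge0.
apply: (lim_test (d := l / 2) (C := C + 1)); [lra|lra|].
move=> h hn hl.
have lh : 0 <= l + h by move: hl; rewrite ler_norml => /andP[hh1 hh2]; lra.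
have c1 := psi_conv a hpi hb (ltW l0) lh.
have c2 := psi_conv a hpi hb lh (ltW l0).
have c3 := Dp_cont a hpi hb l0 hl.
rewrite (addrC h l).
set P1 := bm_psi a b pi (l + h) in c1 c2 *; set P0 := bm_psi a b pi l in c1 c2 *.
set D1 := Dp a b pi (l + h) in c2 c3 *; set D0 := Dp a b pi l in c1 c3 *.
have e1' : h^-1 *: (P1 - P0) - D0 = h^-1 * ((P1 - P0) - h * D0).
  by rewrite /GRing.scale /=; field.
rewrite e1' normrM normfV.
have k : `|P1 - P0 - h * D0| <= `|h| * `|D1 - D0|.
  rewrite -normrM; rewrite !ger0_norm; nra.
have hn0 : 0 < `|h| by rewrite normr_gt0.
rewrite mulrC ler_pdivrMr // -mulrA; apply: (le_trans k).
rewrite ler_pM2l //; apply: (le_trans c3).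
rewrite -/C [X in _ <= X]mulrC ler_pM2l //; lra.
Qed.

Lemma dbl (R : realType) (D : R -> R) (Y : R) :
  (forall l, 0 < l -> D (2 * l) <= 2 * D l) ->
  forall n x, 0 < x -> D x <= Y -> Y < D (2 ^+ n * x) ->
  exists w, x <= w /\ Y / 2 < D w /\ D w <= Y.
Proof.
move=> hd; elim=> [|n IH] x x0 hx hn.
  by move: hn; rewrite expr0 mul1r => hn; exfalso; lra.
have [h2|h2] := leP (D (2 * x)) Y.
  have hn' : Y < D (2 ^+ n * (2 * x)) by rewrite mulrA -exprSr.
  have x2 : 0 < 2 * x by lra.
  case: (IH (2 * x) x2 h2 hn') => w [w1 [w2 w3]].
  by exists w; split => //; lra.
exists x; split => //; split => //.
have := hd x x0; lra.
Qed.

Lemma inv_psi (R : realType) (a b : R) (pi : {measure set R -> \bar R}) (w : R) :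
  levy_cond pi -> 0 <= b -> 0 < w -> 0 < Dp a b pi w ->
  inv_pos (bm_psi a b pi) (bm_psi a b pi w) = w.
Proof.
move=> hpi hb w0 dw; rewrite /inv_pos.
set T := [set x | _].
have ub : ubound T w.
  move=> t [t0 ht]; rewrite leNgt; apply/negP => tw.
  have := psi_conv a hpi hb (ltW w0) (ltW t0).
  have : 0 < (t - w) * Dp a b pi w by apply: mulr_gt0 => //; lra.
  lra.
have wT : T w by split.
apply/le_anti/andP; split.
  by apply: ge_sup => //; exists w.
by apply: sup_upper_bound => //; split; [exists w | exists w].
Qed.

Lemma pow2_ge (R : realType) (n : nat) : (n%:R : R) <= 2 ^+ n.
Proof. by rewrite -natrX ler_nat ltnW // ltn_expl. Qed.

Lemma core (R : realType) (a b : R) (pi : {measure set R -> \bar R})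
  (ha : 0 <= a) (hb : 0 <= b) (hpi : levy_cond pi)
  (hdpsi_unbdd : forall M : R, exists l : R, 0 < l /\ M < bm_dpsi a b pi l)
  (c : R) (hc : 0 < c) (r : R) (r0 : 0 < r)
  (hL4 : 4 <= ln (ln r^-1)) (hLc : c <= ln (ln r^-1) ^+ 2) :
  gauge a b pi r * bm_dpsi_inv a b pi (c / r ^+ 2) <= 4 * r ^+ 2.
Proof.
have r2p : 0 < r ^+ 2 by apply: exprn_gt0.
have goal0 : 0 <= 4 * r ^+ 2 by apply: mulr_ge0 => //; exact: ltW.
rewrite /gauge; set L := ln (ln r^-1) in hL4 hLc *.
set Y1 := c / r ^+ 2; set Y2 := (r^-1 * L) ^+ 2.
have eY2 : r ^+ 2 * Y2 = L ^+ 2 by rewrite /Y2 exprMn exprVn mulrA mulfV ?mul1r // gt_eqF.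
have Y2p : 0 < Y2 by rewrite /Y2 exprn_gt0 // mulr_gt0 // ?invr_gt0 //; lra.
have hY : Y1 <= Y2.
  by rewrite /Y1 -(mulKf (lt0r_neq0 r2p) Y2) eY2 [X in _ <= X]mulrC ler_pM2r // invr_gt0.
rewrite /bm_dpsi_inv /inv_pos -/Y1.
set U := [set x | 0 < x /\ bm_dpsi a b pi x <= Y1].
case: (pselect (has_sup U)) => hU; last by rewrite (sup_out hU) mulr0.
have [[x1 x1U] _] := hU.
have u0 : 0 < sup U.
  by apply: (lt_le_trans (proj1 x1U)); apply: sup_upper_bound.
have e0 : 0 < sup U / 2 by lra.
have [x xU hx] := sup_adherent e0 hU.
case: xU => x0 hx1; rewrite (dpsiE a hpi hb x0) in hx1.
have [l [l0 hl]] := hdpsi_unbdd Y2.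
rewrite (dpsiE a hpi hb l0) in hl.
have [n hn] : exists n : nat, l <= 2 ^+ n * x.
  exists (Num.bound (l / x)).
  have := archi_boundP (divr_ge0 (ltW l0) (ltW x0)).
  have := pow2_ge R (Num.bound (l / x)).
  rewrite ltr_pdivrMr // => h1 h2.
  by apply: ltW; apply: (lt_le_trans h2); rewrite ler_pM2r.
have hn2 : Y2 < Dp a b pi (2 ^+ n * x).
  by apply: (lt_le_trans hl); apply: Dp_mono => //; exact: ltW.
have dd : forall l, 0 < l -> Dp a b pi (2 * l) <= 2 * Dp a b pi l.
  by move=> l' l'0; apply: Dp_double => //; exact: ltW.
have [w [xw [w1 w2]]] := dbl dd x0 (le_trans hx1 hY) hn2.
have w0 : 0 < w by lra.
have Dw0 : 0 < Dp a b pi w by lra.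
have plb := psi_lb hpi ha hb (ltW w0).
have ip := inv_psi (a := a) hpi hb w0 Dw0.
have pw0 : 0 < bm_psi a b pi w.
  apply: lt_le_trans plb; apply: mulr_gt0; [exact: mulr_gt0|lra].
rewrite /bm_phi_inv /inv_pos -/Y2.
set V := [set y | 0 < y /\ bm_phi a b pi y <= Y2].
have Vw : V (bm_psi a b pi w).
  by split => //; rewrite /bm_phi /= ip dpsiE.
case: (pselect (has_sup V)) => hV; last first.
  by rewrite (sup_out hV) invr0 mulr0 mul0r.
have sV : bm_psi a b pi w <= sup V by apply: sup_upper_bound.
have sVp : 0 < sup V by exact: lt_le_trans sV.
have hu : sup U < 2 * w by lra.
have key : L * sup U <= 4 * r ^+ 2 * bm_psi a b pi w.
  have k1 : r ^+ 2 * (w * Dp a b pi w) <= 4 * r ^+ 2 * bm_psi a b pi w.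
    have : r ^+ 2 * (w * Dp a b pi w) = 4 * r ^+ 2 * (w * Dp a b pi w / 4) by field.
    move=> ->; rewrite ler_pM2l //; exact: mulr_gt0.
  have k2 : w * L ^+ 2 / 2 <= r ^+ 2 * (w * Dp a b pi w).
    rewrite -eY2.
    have : r ^+ 2 * w * (Y2 / 2) <= r ^+ 2 * w * Dp a b pi w.
      by rewrite ler_pM2l ?mulr_gt0 //; exact: ltW.
    have -> : w * (r ^+ 2 * Y2) / 2 = r ^+ 2 * w * (Y2 / 2) by ring.
    by move=> h; apply: (le_trans h); rewrite le_eqVlt; apply/orP; left; apply/eqP; ring.
  have k3 : L * sup U <= w * L ^+ 2 / 2.
    have L0 : 0 < L by lra.
    have k4 : L * sup U <= L * (2 * w) by rewrite ler_pM2l //; exact: ltW.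
    apply: (le_trans k4).
    have k5 : 0 <= w * L * (L - 4) by apply: mulr_ge0; [apply: mulr_ge0; exact: ltW|lra].
    have -> : w * L ^+ 2 / 2 = L * (2 * w) + w * L * (L - 4) / 2 by rewrite expr2; field.
    rewrite lerDl; apply: divr_ge0 => //.
  exact: le_trans k3 (le_trans k2 k1).
rewrite mulrAC ler_pdivrMr //.
apply: (le_trans key); rewrite ler_pM2l //; exact: mulr_gt0.
Qed.

Lemma r0_gt0 (R : realType) (a : R) : 0 <= a -> 0 < gauge_r0 a.
Proof.
move=> ha; rewrite /gauge_r0; case: ifP => ha0; first exact: expR_gt0.
rewrite lt_min expR_gt0 andbT invr_gt0 sqrtr_gt0 lt_neqAle ha andbT.
by rewrite eq_sym ha0.
Qed.

Lemma lnln_big (R : realType) (K r : R) : 0 < r -> r < expR (- expR K) -> K < ln (ln r^-1).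
Proof.
move=> r0 hr.
have h1 : ln r < - expR K.
  by rewrite -[X in _ < X]expRK ltr_ln ?posrE // expR_gt0.
have h2 : expR K < ln r^-1 by rewrite lnV ?posrE //; lra.
have h3 : 0 < ln r^-1 by apply: lt_trans h2; exact: expR_gt0.
by rewrite -[X in X < _]expRK ltr_ln ?posrE // expR_gt0.
Qed.

Unset Implicit Arguments.
Theorem lemma2p3 (R : realType) (a b : R) (pi : {measure set R -> \bar R})
  (ha : 0 <= a) (hb : 0 <= b) (hpi : levy_cond pi)
  (hdpsi_unbdd : forall M : R, exists l : R, 0 < l /\ M < bm_dpsi a b pi l)
  (c : R) (hc : 0 < c) :
  exists rc : R, 0 < rc /\ rc < gauge_r0 a /\
    forall r : R, 0 < r -> r < rc ->
      gauge a b pi r * bm_dpsi_inv a b pi (c / r ^+ 2) <= 4 * r ^+ 2.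
Proof.
have g0 := r0_gt0 ha.
exists (Order.min (gauge_r0 a / 2) (expR (- expR (4 + c)))); split.
  by rewrite lt_min expR_gt0 andbT; lra.
split.
  by rewrite gt_min; apply/orP; left; lra.
move=> r r0; rewrite lt_min => /andP[_ hr].
have hK := lnln_big r0 hr.
apply: core => //; first lra.
have : 1 <= ln (ln r^-1) by lra.
rewrite expr2; nra.
Qed.
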